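(* Let $\mu,\nu\in\mathbb{R}$ and $\tau\in\mathbb{R}\setminus\{0\}$. On smooth functions $\Phi(x,t)$ on $\mathbb{R}^2$ define the operators $$H=\partial_t,\quad P=\partial_x,\quad K=-\nu t\,e^{-\tau\partial_t}\partial_x-\mu x\,\frac{e^{\tau\partial_t}-1}{\tau},\quad D=-x\partial_x-t\,\frac{1-e^{-\tau\partial_t}}{\tau},$$ $$C_1=(\mu x^2+\nu t^2e^{-\tau\partial_t})\frac{e^{\tau\partial_t}-1}{\tau}+2\nu xt\,\partial_x+\tau\nu(x\partial_x+x^2\partial_x^2),$$ $$C_2=-(\mu x^2+\nu t^2e^{-2\tau\partial_t})\partial_x-2\mu xt\,\frac{1-e^{-\tau\partial_t}}{\tau}+\tau\nu t\,e^{-2\tau\partial_t}\partial_x,$$ where $e^{a\partial_t}$ is the shift $\Phi(x,t)\mapsto\Phi(x,t+a)$ and $x,t$ denote multiplication operators. Then these operators satisfy the relations $[K,H]=\nu e^{-\tau H}P$, $[K,P]=\mu\frac{e^{\tau H}-1}{\tau}$, $[H,P]=0$, $[K,D]=0$, $[D,H]=\frac{1-e^{-\tau H}}{\tau}$, $[D,C_1]=-C_1+\tau\nu D^2$, $[H,C_1]=-2\nu D$, $[D,P]=P$, $[D,C_2]=-C_2$, $[P,C_2]=2\mu D$, $[K,C_1]=\nu C_2$, $[K,C_2]=\mu C_1-\tau\mu\nu D^2$, $[H,C_2]=e^{-\tau H}K+Ke^{-\tau H}$, $[P,C_1]=-2K-\tau\nu(DP+PD)$, $[C_1,C_2]=-\tau\nu(DC_2+C_2D)$.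 Moreover, with $$E_\tau=\nu\,\partial_x^2-\mu\Big(\frac{e^{\tau\partial_t}-1}{\tau}\Big)^2,$$ one has $[E_\tau,X]=0$ for $X\in\{K,H,P\}$, $[E_\tau,D]=-2E_\tau$, $[E_\tau,C_1]=4\nu(t+\tau+\tau x\partial_x)E_\tau$ and $[E_\tau,C_2]=-4\mu x\,E_\tau$. In particular each of $H,P,K,D,C_1,C_2$ maps solutions of $E_\tau\Phi=0$ to solutions of $E_\tau\Phi=0$. *)

(* Defs.v *)
From Stdlib Require Import Reals.
From Coquelicot Require Import Coquelicot.
Open Scope R_scope.

(* Functions Phi(x,t) on R^2, first argument x, second argument t. *)
Definition fn := R -> R -> R.

Definition dx (f : fn) : fn := fun x t => Derive (fun y => f y t) x.
Definition dt (f : fn) : fn := fun x t => Derive (fun s => f x s) t.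

Definition cont2 (f : fn) : Prop :=
  forall x t, continuous (fun p : R * R => f (fst p) (snd p)) (x, t).

Fixpoint Ck (k : nat) (f : fn) : Prop :=
  match k with
  | O => cont2 f
  | S k' => cont2 f
            /\ (forall x t, ex_derive (fun y => f y t) x)
            /\ (forall x t, ex_derive (fun s => f x s) t)
            /\ Ck k' (dx f) /\ Ck k' (dt f)
  end.

Definition smooth (f : fn) : Prop := forall k, Ck k f.

Definition shift (a : R) (f : fn) : fn := fun x t => f x (t + a).
Definition zerof : fn := fun _ _ => 0.

Section Ops.
Variables (mu nu tau : R).

Definition fwd_diff (f : fn) : fn := fun x t => (f x (t + tau) - f x t) / tau.
Definition bwd_diff (f : fn) : fn := fun x t => (f x t - f x (t - tau)) / tau.

Definition opH (f : fn) : fn := dt f.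
Definition opP (f : fn) : fn := dx f.
Definition opK (f : fn) : fn := fun x t =>
  - nu * t * shift (- tau) (dx f) x t - mu * x * fwd_diff f x t.
Definition opD (f : fn) : fn := fun x t =>
  - x * dx f x t - t * bwd_diff f x t.
Definition opC1 (f : fn) : fn := fun x t =>
  mu * x ^ 2 * fwd_diff f x t + nu * t ^ 2 * shift (- tau) (fwd_diff f) x t
  + 2 * nu * x * t * dx f x t
  + tau * nu * (x * dx f x t + x ^ 2 * dx (dx f) x t).
Definition opC2 (f : fn) : fn := fun x t =>
  - (mu * x ^ 2 * dx f x t + nu * t ^ 2 * shift (- (2 * tau)) (dx f) x t)
  - 2 * mu * x * t * bwd_diff f x t
  + tau * nu * t * shift (- (2 * tau)) (dx f) x t.
Definition opE (f : fn) : fn := fun x t =>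
  nu * dx (dx f) x t - mu * fwd_diff (fwd_diff f) x t.
End Ops.

Definition comm (A B : fn -> fn) (f : fn) : fn := fun x t => A (B f) x t - B (A f) x t.
Definition addf (f g : fn) : fn := fun x t => f x t + g x t.
Definition scalf (c : R) (f : fn) : fn := fun x t => c * f x t.

(* Main.v *)
Require Import Defs.
From Stdlib Require Import Reals FunctionalExtensionality.
From Coquelicot Require Import Coquelicot.
Open Scope R_scope.

Lemma smooth_dx f : smooth f -> smooth (dx f).
Proof. intros H k. exact (proj1 (proj2 (proj2 (proj2 (H (S k)))))). Qed.
Lemma smooth_dt f : smooth f -> smooth (dt f).
Proof. intros H k. exact (proj2 (proj2 (proj2 (proj2 (H (S k)))))). Qed.
Lemma ex_dx_at f : smooth f -> forall x c, ex_derive (fun y => f y c) x.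
Proof. intros H x c. exact (proj1 (proj2 (H 1%nat)) x c). Qed.
Lemma ex_dt_at f : smooth f -> forall x c, ex_derive (fun y => f x y) c.
Proof. intros H x c. exact (proj1 (proj2 (proj2 (H 1%nat))) x c). Qed.
Lemma smooth_cont f : smooth f -> cont2 f.
Proof. intros H. exact (H 0%nat). Qed.

Lemma schwarz f : smooth f -> dt (dx f) = dx (dt f).
Proof.
  intros H. apply functional_extensionality; intro x.
  apply functional_extensionality; intro y. unfold dx, dt. symmetry.
  apply Schwarz.
  - exists (mkposreal 1 Rlt_0_1). intros u v _ _. repeat split.
    + apply (ex_dx_at f H).
    + apply (ex_dt_at f H).
    + apply (ex_dx_at (dt f) (smooth_dt f H)).
    + apply (ex_dt_at (dx f) (smooth_dx f H)).
  - apply continuity_2d_pt_filterlim.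
    apply (smooth_cont (dx (dt f)) (smooth_dx _ (smooth_dt _ H))).
  - apply continuity_2d_pt_filterlim.
    apply (smooth_cont (dt (dx f)) (smooth_dt _ (smooth_dx _ H))).
Qed.

Lemma dx_lam (G L : fn) : (forall x s, is_derive (fun y => G y s) x (L x s)) -> dx G = L.
Proof.
  intros H. apply functional_extensionality; intro x.
  apply functional_extensionality; intro s. unfold dx. apply is_derive_unique, H.
Qed.
Lemma dt_lam (G L : fn) : (forall x s, is_derive (fun y => G x y) s (L x s)) -> dt G = L.
Proof.
  intros H. apply functional_extensionality; intro x.
  apply functional_extensionality; intro s. unfold dt. apply is_derive_unique, H.
Qed.
Lemma Derive_dxE (g : fn) x c : Derive (fun y => g y c) x = dx g x c.
Proof. reflexivity. Qed.
Lemma Derive_dtE (g : fn) x c : Derive (fun y => g x y) c = dt g x c.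
Proof. reflexivity. Qed.

Ltac is_atom g := lazymatch g with
  | dx ?h => is_atom h | dt ?h => is_atom h | _ => is_var g end.
Ltac not_atom g := tryif is_atom g then fail else idtac.
Ltac no_bad G := tryif (match G with
   | context [dx ?H] => not_atom H | context [dt ?H] => not_atom H end)
   then fail else idtac.

Ltac solve_smooth := lazymatch goal with
  | |- smooth (dx ?g) => apply smooth_dx; solve_smooth
  | |- smooth (dt ?g) => apply smooth_dt; solve_smooth
  | |- smooth ?g => match goal with H : smooth g |- _ => exact H end end.
Ltac side := repeat match goal with
  | |- _ /\ _ => split
  | |- True => exact I
  | |- ex_derive (fun y => ?g y ?c) ?x =>
      let Hs := fresh in assert (Hs : smooth g) by solve_smooth; exact (ex_dx_at g Hs x c)
  | |- ex_derive (fun y => ?g ?x y) ?c =>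
      let Hs := fresh in assert (Hs : smooth g) by solve_smooth; exact (ex_dt_at g Hs x c)
  end.

Ltac fold_D := repeat match goal with
  | |- context [Derive (fun y => ?g y ?c) ?x] => change (Derive (fun y => g y c) x) with (dx g x c)
  | |- context [Derive (fun y => ?g ?x y) ?c] => change (Derive (fun y => g x y) c) with (dt g x c)
  end.
Ltac fin_eq := fold_D; reflexivity.

Ltac do_dx G :=
  let L := fresh "L" in let HL := fresh "HL" in
  evar (L : fn);
  assert (HL : dx G = L);
  [ unfold L; apply dx_lam; intros ? ?; cbv beta; auto_derive; [side | fin_eq] |];
  subst L; rewrite HL; clear HL.
Ltac do_dt G :=
  let L := fresh "L" in let HL := fresh "HL" in
  evar (L : fn);
  assert (HL : dt G = L);
  [ unfold L; apply dt_lam; intros ? ?; cbv beta; auto_derive; [side | fin_eq] |];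
  subst L; rewrite HL; clear HL.

Ltac elim_derivs :=
  repeat match goal with
  | |- context [dx ?G] => not_atom G; no_bad G; do_dx G
  | |- context [dt ?G] => not_atom G; no_bad G; do_dt G
  end.

Ltac norm_sch := repeat (rewrite (schwarz _); [|solve_smooth]).

Ltac is_canon s t tau := first [ constr_eq s t | constr_eq s (t + tau) | constr_eq s (t + 2*tau)
  | constr_eq s (t + 3*tau) | constr_eq s (t + 4*tau) | constr_eq s (t + - tau)
  | constr_eq s (t + -(2*tau)) | constr_eq s (t + -(3*tau)) | constr_eq s (t + -(4*tau)) ].
Ltac try_canon s t tau := first [ replace s with t by ring | replace s with (t + tau) by ring
  | replace s with (t + 2*tau) by ring | replace s with (t + 3*tau) by ring
  | replace s with (t + 4*tau) by ring | replace s with (t + - tau) by ring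
  | replace s with (t + -(2*tau)) by ring | replace s with (t + -(3*tau)) by ring
  | replace s with (t + -(4*tau)) by ring ].
Ltac norm_args t tau :=
  repeat match goal with
  | |- context [?g ?a ?s] => is_atom g; tryif is_canon s t tau then fail else try_canon s t tau
  end.

Ltac crunch tau Htau :=
  unfold comm, addf, scalf, zerof, opH, opP, opK, opD, opC1, opC2, opE, shift, fwd_diff, bwd_diff;
  elim_derivs; norm_sch;
  let x := fresh "x" in let t := fresh "t" in
  apply functional_extensionality; intro x; apply functional_extensionality; intro t;
  cbv beta; norm_args t tau; field; exact Htau.

Section S.
Variables (mu nu tau : R) (Htau : tau <> 0) (f : fn) (Hf : smooth f).
Let H := opH.
Let P := opP.
Let K := opK mu nu tau.
Let D := opD tau.
Let C1 := opC1 mu nu tau.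
Let C2 := opC2 mu nu tau.
Let E := opE mu nu tau.
Let emH := shift (- tau).
Ltac cr := unfold H, P, K, D, C1, C2, E, emH; crunch tau Htau.
Lemma dx0 : dx zerof = zerof.
Proof. apply functional_extensionality; intro x; apply functional_extensionality; intro t.
  unfold dx, zerof. apply Derive_const. Qed.
Lemma dt0 : dt zerof = zerof.
Proof. apply functional_extensionality; intro x; apply functional_extensionality; intro t.
  unfold dt, zerof. apply Derive_const. Qed.
Ltac z0 := unfold H, P, K, D, C1, C2, E, emH, opH, opP, opK, opD, opC1, opC2, opE, shift, fwd_diff, bwd_diff;
  rewrite ?dx0, ?dt0, ?dx0;
  apply functional_extensionality; intro x; apply functional_extensionality; intro t;
  unfold zerof; unfold Rdiv; ring.
Lemma decomp (A B : fn -> fn) g x t : A (B g) x t = comm A B g x t + B (A g) x t.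
Proof. unfold comm; ring. Qed.
Lemma r1 : comm K H f = scalf nu (emH (P f)). Proof using All. cr. Qed.
Lemma r2 : comm K P f = scalf mu (fwd_diff tau f). Proof using All. cr. Qed.
Lemma r3 : comm H P f = zerof. Proof using All. cr. Qed.
Lemma r4 : comm K D f = zerof. Proof using All. cr. Qed.
Lemma r5 : comm D H f = bwd_diff tau f. Proof using All. cr. Qed.
Lemma r6 : comm D C1 f = addf (scalf (-1) (C1 f)) (scalf (tau * nu) (D (D f))). Proof using All. cr. Qed.
Lemma r7 : comm H C1 f = scalf (-2 * nu) (D f). Proof using All. cr. Qed.
Lemma r8 : comm D P f = P f. Proof using All. cr. Qed.
Lemma r9 : comm D C2 f = scalf (-1) (C2 f). Proof using All. cr. Qed.
Lemma r10 : comm P C2 f = scalf (2 * mu) (D f). Proof using All. cr. Qed.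
Lemma r11 : comm K C1 f = scalf nu (C2 f). Proof using All. cr. Qed.
Lemma r12 : comm K C2 f = addf (scalf mu (C1 f)) (scalf (- (tau * mu * nu)) (D (D f))). Proof using All. cr. Qed.
Lemma r13 : comm H C2 f = addf (emH (K f)) (K (emH f)). Proof using All. cr. Qed.
Lemma r14 : comm P C1 f = addf (scalf (-2) (K f))
                       (scalf (- (tau * nu)) (addf (D (P f)) (P (D f)))). Proof using All. cr. Qed.
Lemma r15 : comm C1 C2 f = scalf (- (tau * nu)) (addf (D (C2 f)) (C2 (D f))). Proof using All. cr. Qed.
Lemma r16 : comm E K f = zerof. Proof using All. cr. Qed.
Lemma r17 : comm E H f = zerof. Proof using All. cr. Qed.
Lemma r18 : comm E P f = zerof. Proof using All. cr. Qed.
Lemma r19 : comm E D f = scalf (-2) (E f). Proof using All. cr. Qed.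
Lemma r20 : comm E C1 f = (fun x t => 4 * nu * ((t + tau) * E f x t + tau * x * dx (E f) x t)). Proof using All. cr. Qed.
Lemma r21 : comm E C2 f = (fun x t => -4 * mu * x * E f x t). Proof using All. cr. Qed.
Lemma sym (HE : E f = zerof) :
  E (H f) = zerof /\ E (P f) = zerof /\ E (K f) = zerof /\
  E (D f) = zerof /\ E (C1 f) = zerof /\ E (C2 f) = zerof.
Proof using All.
  assert (HH : H zerof = zerof) by z0.
  assert (HP : P zerof = zerof) by z0.
  assert (HK : K zerof = zerof) by z0.
  assert (HD : D zerof = zerof) by z0.
  assert (HC1 : C1 zerof = zerof) by z0.
  assert (HC2 : C2 zerof = zerof) by z0.
  repeat split; apply functional_extensionality; intro x; apply functional_extensionality; intro t;
  rewrite decomp, HE.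
  - rewrite r17, HH. unfold zerof; ring.
  - rewrite r18, HP. unfold zerof; ring.
  - rewrite r16, HK. unfold zerof; ring.
  - rewrite r19, HD, HE. unfold scalf, zerof; ring.
  - rewrite r20, HC1, HE, dx0. unfold zerof; ring.
  - rewrite r21, HC2, HE. unfold zerof; ring.
Qed.
End S.

Theorem mainTheorem2 (mu nu tau : R) (Htau : tau <> 0) (Phi : fn) (HPhi : smooth Phi) :
  let H := opH in
  let P := opP in
  let K := opK mu nu tau in
  let D := opD tau in
  let C1 := opC1 mu nu tau in
  let C2 := opC2 mu nu tau in
  let E := opE mu nu tau in
  let emH := shift (- tau) in
  (* relations of the algebra *)
  comm K H Phi = scalf nu (emH (P Phi)) /\
  comm K P Phi = scalf mu (fwd_diff tau Phi) /\
  comm H P Phi = zerof /\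
  comm K D Phi = zerof /\
  comm D H Phi = bwd_diff tau Phi /\
  comm D C1 Phi = addf (scalf (-1) (C1 Phi)) (scalf (tau * nu) (D (D Phi))) /\
  comm H C1 Phi = scalf (-2 * nu) (D Phi) /\
  comm D P Phi = P Phi /\
  comm D C2 Phi = scalf (-1) (C2 Phi) /\
  comm P C2 Phi = scalf (2 * mu) (D Phi) /\
  comm K C1 Phi = scalf nu (C2 Phi) /\
  comm K C2 Phi = addf (scalf mu (C1 Phi)) (scalf (- (tau * mu * nu)) (D (D Phi))) /\
  comm H C2 Phi = addf (emH (K Phi)) (K (emH Phi)) /\
  comm P C1 Phi = addf (scalf (-2) (K Phi))
                       (scalf (- (tau * nu)) (addf (D (P Phi)) (P (D Phi)))) /\
  comm C1 C2 Phi = scalf (- (tau * nu)) (addf (D (C2 Phi)) (C2 (D Phi))) /\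
  (* relations with E_tau *)
  comm E K Phi = zerof /\
  comm E H Phi = zerof /\
  comm E P Phi = zerof /\
  comm E D Phi = scalf (-2) (E Phi) /\
  comm E C1 Phi = (fun x t => 4 * nu * ((t + tau) * E Phi x t + tau * x * dx (E Phi) x t)) /\
  comm E C2 Phi = (fun x t => -4 * mu * x * E Phi x t) /\
  (* symmetries of E_tau Phi = 0 *)
  (E Phi = zerof ->
     E (H Phi) = zerof /\ E (P Phi) = zerof /\ E (K Phi) = zerof /\
     E (D Phi) = zerof /\ E (C1 Phi) = zerof /\ E (C2 Phi) = zerof).
Proof.
  cbv zeta.
  split; [exact (r1 mu nu tau Htau Phi HPhi)|].
  split; [exact (r2 mu nu tau Htau Phi HPhi)|].
  split; [exact (r3 mu nu tau Htau Phi HPhi)|].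
  split; [exact (r4 mu nu tau Htau Phi HPhi)|].
  split; [exact (r5 mu nu tau Htau Phi HPhi)|].
  split; [exact (r6 mu nu tau Htau Phi HPhi)|].
  split; [exact (r7 mu nu tau Htau Phi HPhi)|].
  split; [exact (r8 mu nu tau Htau Phi HPhi)|].
  split; [exact (r9 mu nu tau Htau Phi HPhi)|].
  split; [exact (r10 mu nu tau Htau Phi HPhi)|].
  split; [exact (r11 mu nu tau Htau Phi HPhi)|].
  split; [exact (r12 mu nu tau Htau Phi HPhi)|].
  split; [exact (r13 mu nu tau Htau Phi HPhi)|].
  split; [exact (r14 mu nu tau Htau Phi HPhi)|].
  split; [exact (r15 mu nu tau Htau Phi HPhi)|].
  split; [exact (r16 mu nu tau Htau Phi HPhi)|].
  split; [exact (r17 mu nu tau Htau Phi HPhi)|].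
  split; [exact (r18 mu nu tau Htau Phi HPhi)|].
  split; [exact (r19 mu nu tau Htau Phi HPhi)|].
  split; [exact (r20 mu nu tau Htau Phi HPhi)|].
  split; [exact (r21 mu nu tau Htau Phi HPhi)|].
  exact (sym mu nu tau Htau Phi HPhi).
Qed.
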